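(* Let $\Gamma=(-a_1,\dots,-a_k)$ be a linear chain with integers $a_i\ge 2$. Then $\Gamma\in\mathcal G_r$ if and only if there are relatively prime integers $p>q>0$ with $a_1-\cfrac{1}{a_2-\cfrac{1}{\ddots-\cfrac{1}{a_k}}}=\dfrac{p^2}{pq-1}$.
   Context: $\mathcal G_r$ is the smallest set of linear chains (written as the sequence of vertex decorations along the chain) which contains the one-vertex chain $(-4)$ and which, whenever it contains $(-a_1,\dots,-a_k)$, also contains $(-2,-a_1,\dots,-a_{k-1},-a_k-1)$ and $(-a_1-1,-a_2,\dots,-a_k,-2)$. *)

(* Defs.v *)
From HB Require Import structures.
From mathcomp Require Import all_boot all_order all_algebra.
Set Implicit Arguments. Unset Strict Implicit. Unset Printing Implicit Defensive.
Import Order.TTheory GRing.Theory Num.Theory.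

(* A linear chain (-a_1,...,-a_k) is represented by the sequence [:: a_1; ...; a_k]
   of the (positive) absolute values of its vertex decorations. *)

Inductive Gr : seq nat -> Prop :=
| Gr_base : Gr [:: 4]
| Gr_left : forall (s : seq nat) (a : nat),
    Gr (rcons s a) -> Gr (2 :: rcons s a.+1)
| Gr_right : forall (a : nat) (s : seq nat),
    Gr (a :: s) -> Gr (rcons (a.+1 :: s) 2).

(* Hirzebruch–Jung continued fraction [a_1,...,a_k]^- = a_1 - 1/(a_2 - 1/(... - 1/a_k)),
   computed in the rationals (the empty chain is given the junk value 0). *)
Fixpoint hjcf (s : seq nat) : rat :=
  match s with
  | [::] => 0
  | [:: a] => a%:R
  | a :: t => a%:R - (hjcf t)^-1
  end.

(* Main.v *)
From HB Require Import structures.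
From mathcomp Require Import all_boot all_order all_algebra.
From mathcomp Require Import zify ring lra.
Require Import Defs.
Import Order.TTheory GRing.Theory Num.Theory.
Local Open Scope ring_scope.

Record q4 := Q4 {n4 : int; d4 : int; x4 : int; y4 : int}.

Fixpoint F (s : seq nat) : q4 :=
  match s with
  | [::] => Q4 1 0 0 (-1)
  | a :: t => let f := F t in
      Q4 (a%:Z * n4 f - d4 f) (n4 f) (a%:Z * x4 f - y4 f) (x4 f)
  end.

Definition W (p q : int) : q4 :=
  Q4 (p ^+ 2) (p * q - 1) (p * (p - q) - 1) (q * (p - q) - 1).

Lemma F_rcons s a : F (rcons s a) =
  Q4 (a%:Z * n4 (F s) - x4 (F s)) (a%:Z * d4 (F s) - y4 (F s)) (n4 (F s)) (d4 (F s)).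
Proof.
elim: s => [|b s IH] /=; first by congr Q4; ring.
rewrite IH /=; congr Q4; ring.
Qed.

Lemma stepL s a (p q : int) : F (rcons s a) = W p q ->
  F (2 :: rcons s a.+1) = W (2 * p - q) p.
Proof.
rewrite F_rcons /W => -[h1 h2 h3 h4] /=; rewrite F_rcons /=.
have hX : x4 (F s) = a%:Z * n4 (F s) - p ^+ 2 by rewrite -h1; ring.
have hY : y4 (F s) = a%:Z * d4 (F s) - (p * q - 1) by rewrite -h2; ring.
rewrite hX hY h3 h4 -addn1 PoszD; congr Q4; ring.
Qed.

Lemma stepR s a (p q : int) : F (a :: s) = W p q ->
  F (rcons (a.+1 :: s) 2) = W (p + q) q.
Proof.
rewrite /W /= => -[h1 h2 h3 h4]; rewrite F_rcons /=.
have hN : n4 (F s) = p * q - 1 by [].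
have hX : x4 (F s) = q * (p - q) - 1 by [].
have hQ : d4 (F s) = a%:Z * n4 (F s) - p ^+ 2 by rewrite -h1; ring.
have hY : y4 (F s) = a%:Z * x4 (F s) - (p * (p - q) - 1) by rewrite -h3; ring.
rewrite hQ hY hX hN -addn1 PoszD; congr Q4; ring.
Qed.

Definition ge2 (s : seq nat) := all (fun a => (2 <= a)%N) s.

Lemma Gr_ok s : Gr s -> s != [::] /\ ge2 s.
Proof.
elim=> [|t a _ [_ IH]|a t _ [_ IH]]; split => //.
- rewrite /ge2 /= all_rcons in IH *; rewrite all_rcons.
  by case/andP: IH => h ->; rewrite andbT; apply: ltnW.
- move: IH; rewrite /ge2 all_rcons /= => /andP [h ->]; rewrite !andbT; lia.
Qed.

Lemma F_pos s : ge2 s -> 0 <= d4 (F s) < n4 (F s) /\ (s != [::] -> 0 < d4 (F s)).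
Proof.
elim: s => [|a t IH] //= /andP [ha ht].
have [/andP [h1 h2] _] := IH ht.
split => //; last by move=> _; lia.
apply/andP; split; first lia.
have ha' : 2%:Z <= a%:Z by rewrite lez_nat.
nia.
Qed.

Lemma hjcf_F s : s != [::] -> ge2 s ->
  hjcf s = (n4 (F s))%:~R / (d4 (F s))%:~R.
Proof.
elim: s => [|a t IH] // _ /andP [ha ht].
case: t IH ht => [|b u] IH ht; first by rewrite /= mulr1 subr0 divr1.
have [/andP [h1 h2] _] := F_pos (b :: u) ht.
have -> : hjcf [:: a, b & u] = a%:R - (hjcf (b :: u))^-1 by [].
rewrite IH // invf_div.
have -> : F [:: a, b & u] = Q4 (a%:Z * n4 (F (b :: u)) - d4 (F (b :: u))) (n4 (F (b :: u)))
   (a%:Z * x4 (F (b :: u)) - y4 (F (b :: u))) (x4 (F (b :: u))) by [].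
move: (F (b :: u)) h1 h2 => [N Q X Y] /= h1 h2.
have hN : (N%:~R : rat) != 0 by rewrite intr_eq0 gt_eqF // (le_lt_trans h1 h2).
rewrite intrB intrM /=; field.
exact: hN.
Qed.

Lemma hj_bounds u a : ge2 (a :: u) ->
  (a%:R - 1 < hjcf (a :: u) <= a%:R) /\ (u != [::] -> hjcf (a :: u) < a%:R).
Proof.
elim: u a => [|b v IH] a /andP [ha hv].
  split => //; rewrite [hjcf _]/= lexx andbT; set x := (a%:R : rat); lra.
have [/andP [hb1 _] _] := IH b hv.
have hb : (2%:R : rat) <= b%:R by rewrite ler_nat; case/andP: hv.
have hx : 1 < hjcf (b :: v) by lra.
have hx0 : 0 < hjcf (b :: v) by lra.
have hi1 : (hjcf (b :: v))^-1 < 1 by rewrite invf_lt1.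
have hi0 : 0 < (hjcf (b :: v))^-1 by rewrite invr_gt0.
have -> : hjcf [:: a, b & v] = a%:R - (hjcf (b :: v))^-1 by [].
split => [|_]; last lra.
apply/andP; split; lra.
Qed.

Lemma hj_uniq s t : s != [::] -> t != [::] -> ge2 s -> ge2 t ->
  hjcf s = hjcf t -> s = t.
Proof.
elim: s t => [|a u IH] // [|b v] // _ _ hs ht E.
have [/andP [ha1 ha2] ha3] := hj_bounds u a hs.
have [/andP [hb1 hb2] hb3] := hj_bounds v b ht.
have hab : a = b.
  apply/eqP; rewrite eqn_leq; apply/andP; split.
  - rewrite -ltnS -(ltr_nat rat) -natr1; rewrite E in ha2; lra.
  - rewrite -ltnS -(ltr_nat rat) -natr1; rewrite -E in hb2; lra.
subst b; congr cons.
case: u v IH hs ht E ha3 hb3 {ha1 ha2 hb1 hb2} => [|c u] [|d v] IH hs ht E ha3 hb3 //.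
- by move: (hb3 isT); rewrite -E /= ltxx.
- by move: (ha3 isT); rewrite E /= ltxx.
have E' : hjcf (c :: u) = hjcf (d :: v).
  move: E; rewrite /= => /addrI /oppr_inj /invr_inj; done.
case/andP: hs => _ hs; case/andP: ht => _ ht.
exact: IH.
Qed.

Lemma gcd_qp q p : (q <= p)%N -> gcdn q (p - q) = gcdn q p.
Proof.
move=> h; rewrite [in RHS](_ : p = q + (p - q))%N; last by lia.
by rewrite gcdnDl.
Qed.

Lemma gcd_sub x q : (x <= q)%N -> gcdn q (q - x) = gcdn q x.
Proof.
move=> h; have hq : q = ((q - x) + x)%N by lia.
move: (q - x)%N hq => y ->.
by rewrite gcdnC gcdnDl [RHS]gcdnC gcdnDr gcdnC.
Qed.

Lemma cop_left p q : (q < p)%N -> coprime p q -> coprime (2 * p - q) p.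
Proof.
move=> h hc; rewrite /coprime gcdnC (_ : 2 * p - q = p + (p - q))%N; last by lia.
by rewrite gcdnDl gcd_sub // ltnW.
Qed.

Lemma cop_right p q : coprime p q -> coprime (p + q) q.
Proof. by move=> hc; rewrite /coprime gcdnC addnC gcdnDl gcdnC. Qed.

Lemma Gr_W s : Gr s -> exists p q : nat,
  [/\ (0 < q)%N, (q < p)%N, coprime p q & F s = W p%:Z q%:Z].
Proof.
elim=> [|t a _ [p [q [h1 h2 h3 h4]]]|a t _ [p [q [h1 h2 h3 h4]]]].
- by exists 2%N, 1%N.
- exists (2 * p - q)%N, p; split; [lia|lia|exact: cop_left|].
  rewrite (stepL _ _ _ _ h4); congr W; lia.
- exists (p + q)%N, q; split; [lia|lia|exact: cop_right|].
  by rewrite (stepR _ _ _ _ h4) PoszD.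
Qed.

Lemma ex_chain n : forall p q : nat, (p <= n)%N -> (0 < q)%N -> (q < p)%N ->
  coprime p q -> exists s, Gr s /\ F s = W p%:Z q%:Z.
Proof.
elim: n => [|n IH] p q hn h1 h2 hc; first by lia.
have [lt|gt|eq] := ltngtP (2 * q) p.
- have hc' : coprime (p - q) q by rewrite /coprime gcdnC gcd_qp ?(ltnW h2) // gcdnC.
  have [s0 [g0 f0]] := IH (p - q)%N q ltac:(lia) h1 ltac:(lia) hc'.
  have [ne _] := Gr_ok _ g0.
  case: s0 g0 f0 ne => [|a t] g0 f0 // _.
  exists (rcons (a.+1 :: t) 2); split; first exact: Gr_right.
  by rewrite (stepR _ _ _ _ f0) -PoszD subnK // ltnW.
- have hc' : coprime q (2 * q - p) .
    rewrite /coprime (_ : 2 * q - p = q - (p - q))%N; last by lia.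
    by rewrite gcd_sub; [rewrite gcd_qp ?(ltnW h2) // -/(coprime q p) coprime_sym|lia].
  have [s0 [g0 f0]] := IH q (2 * q - p)%N ltac:(lia) ltac:(lia) ltac:(lia) hc'.
  have [ne _] := Gr_ok _ g0.
  case/lastP: s0 g0 f0 ne => [|t a] g0 f0 // _.
  exists (2 :: rcons t a.+1); split; first exact: Gr_left.
  rewrite (stepL _ _ _ _ f0); congr W; lia.
- move: hc; rewrite -eq mul2n -addnn /coprime gcdnC gcdnDl gcdnn => /eqP q1.
  subst q; subst p.
  by exists [:: 4%N]; split; [exact: Gr_base|].
Qed.

Lemma hjcf_W s p q : s != [::] -> ge2 s -> (0 < q)%N -> (q < p)%N ->
  F s = W p%:Z q%:Z -> hjcf s = (p ^ 2)%:R / (p * q - 1)%:R.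
Proof.
move=> ne g h1 h2 E; rewrite hjcf_F // E /=.
have e1 : p%:Z ^+ 2 = (p ^ 2)%N%:Z by rewrite -[RHS]natz natrX natz.
have e2 : p%:Z * q%:Z - 1 = (p * q - 1)%N%:Z.
  have hpq : (0 < p * q)%N by rewrite muln_gt0 h1 andbT; lia.
  rewrite -PoszM; move: (p * q)%N hpq => m hm; lia.
by rewrite e1 e2 -!pmulrn.
Qed.

Theorem proposition4p1 (s : seq nat) :
  s != [::] -> all (fun a => (2 <= a)%N) s ->
  (Gr s <->
   exists p q : nat, [/\ (0 < q)%N, (q < p)%N, coprime p q &
     hjcf s = (p ^ 2)%:R / (p * q - 1)%:R]).
Proof.
move=> ne g; split.
- move=> gs; have [p [q [h1 h2 h3 h4]]] := Gr_W _ gs.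
  exists p, q; split => //; exact: hjcf_W h4.
- move=> [p [q [h1 h2 h3 h4]]].
  have [s0 [g0 f0]] := ex_chain p p q (leqnn p) h1 h2 h3.
  have [ne0 ge0] := Gr_ok _ g0.
  have e0 := hjcf_W _ _ _ ne0 ge0 h1 h2 f0.
  have -> : s = s0 by apply: hj_uniq => //; rewrite h4 e0.
  exact: g0.
Qed.
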